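(* Let $\lambda\in\mathbb{R}$, let $n$ be a positive integer and let $k$ be a positive integer. Then \[ S_{k,\lambda}(n)=\frac{(n)_{k+1,\lambda}}{k+1}+\frac{1}{k+1}\sum_{r=0}^{k-1}\binom{k+1}{r}(-1)^{k+1-r}\langle 1\rangle_{k+1-r,\lambda}\,S_{r,\lambda}(n). \]
   Context: For $\lambda\in\mathbb{R}$ the degenerate falling factorials are $(x)_{0,\lambda}=1$ and $(x)_{m,\lambda}=x(x-\lambda)\cdots(x-(m-1)\lambda)$ for $m\ge 1$, and the degenerate rising factorials are $\langle x\rangle_{0,\lambda}=1$ and $\langle x\rangle_{m,\lambda}=x(x+\lambda)(x+2\lambda)\cdots(x+(m-1)\lambda)$ for $m\ge1$. For a nonnegative integer $r$ and positive integer $n$, $S_{r,\lambda}(n)=\sum_{j=1}^{n}(j)_{r,\lambda}$ (so in particular $S_{0,\lambda}(n)=n$). *)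

(* Defs.v *)
From Stdlib Require Import Reals.
Open Scope R_scope.

Fixpoint dfall (lam x : R) (m : nat) : R :=
  match m with
  | O => 1
  | S m' => dfall lam x m' * (x - INR m' * lam)
  end.

Fixpoint drise (lam x : R) (m : nat) : R :=
  match m with
  | O => 1
  | S m' => drise lam x m' * (x + INR m' * lam)
  end.

Fixpoint sum_from (f : nat -> R) (a len : nat) : R :=
  match len with
  | O => 0
  | S l => sum_from f a l + f (a + l)%nat
  end.

Definition Ssum (lam : R) (r n : nat) : R :=
  sum_from (fun j => dfall lam (INR j) r) 1 n.

(* Main.v *)
Require Import Defs.
From Stdlib Require Import Reals Lra Lia Factorial.
Open Scope R_scope.

Lemma sf_ext f g a m : (forall i, (i < m)%nat -> f (a + i)%nat = g (a + i)%nat) ->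
  sum_from f a m = sum_from g a m.
Proof.
  induction m as [|m IH]; intros H; simpl; [reflexivity|].
  rewrite IH by (intros; apply H; lia). rewrite H by lia. reflexivity.
Qed.

Lemma sf_plus f g a m : sum_from (fun i => f i + g i) a m = sum_from f a m + sum_from g a m.
Proof. induction m as [|m IH]; simpl; [lra|]. rewrite IH; ring. Qed.

Lemma sf_scal c f a m : sum_from (fun i => c * f i) a m = c * sum_from f a m.
Proof. induction m as [|m IH]; simpl; [ring|]. rewrite IH; ring. Qed.

Lemma sf_multr c f a m : sum_from f a m * c = sum_from (fun i => f i * c) a m.
Proof. induction m as [|m IH]; simpl; [ring|]. rewrite <- IH; ring. Qed.

Lemma sf_reindex f a m : sum_from f (S a) m = sum_from (fun i => f (S i)) a m.
Proof. induction m as [|m IH]; simpl; [reflexivity|]. rewrite IH; reflexivity. Qed.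

Lemma sf_shift f a m : sum_from f a (S m) = f a + sum_from f (S a) m.
Proof.
  induction m as [|m IH].
  - simpl. rewrite Nat.add_0_r. ring.
  - change (sum_from f a (S (S m))) with (sum_from f a (S m) + f (a + S m)%nat).
    rewrite IH. simpl. replace (a + S m)%nat with (S (a + m)) by lia. ring.
Qed.

Lemma sf_tele f m : sum_from (fun i => f (S i) - f i) 0 m = f m - f 0%nat.
Proof. induction m as [|m IH]; simpl; [ring|]. rewrite IH; ring. Qed.

Lemma sf_swap (F : nat -> nat -> R) a m b p :
  sum_from (fun i => sum_from (fun j => F i j) b p) a m =
  sum_from (fun j => sum_from (fun i => F i j) a m) b p.
Proof.
  induction m as [|m IH]; simpl.
  - induction p as [|p IHp]; simpl; [reflexivity|]. rewrite <- IHp; ring.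
  - rewrite IH. rewrite <- (sf_plus (fun j => sum_from (fun i => F i j) a m) (fun j => F (a+m)%nat j)).
    reflexivity.
Qed.

Lemma C_n_0 m : Binomial.C m 0 = 1.
Proof.
  unfold Binomial.C. rewrite Nat.sub_0_r. simpl.
  assert (H := INR_fact_neq_0 m). field. auto.
Qed.

Lemma C_n_n m : Binomial.C m m = 1.
Proof.
  unfold Binomial.C. rewrite Nat.sub_diag. simpl.
  assert (H := INR_fact_neq_0 m). field. auto.
Qed.

Lemma C_Sn_n k : Binomial.C (S k) k = INR (S k).
Proof.
  unfold Binomial.C. replace (S k - k)%nat with 1%nat by lia.
  rewrite fact_simpl, mult_INR. simpl (fact 1).
  assert (H := INR_fact_neq_0 k). simpl (INR 1). field. auto.
Qed.

Lemma dbin lam x y m : dfall lam (x + y) m =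
  sum_from (fun r => Binomial.C m r * dfall lam x r * dfall lam y (m - r)) 0 (S m).
Proof.
  induction m as [|m IH].
  - simpl. rewrite C_n_0. ring.
  - change (dfall lam (x + y) (S m)) with (dfall lam (x + y) m * (x + y - INR m * lam)).
    rewrite IH, sf_multr.
    rewrite (sf_ext _ (fun r => Binomial.C m r * dfall lam x (S r) * dfall lam y (m - r)
                     + Binomial.C m r * dfall lam x r * dfall lam y (S (m - r)))).
    2:{ intros i Hi. simpl. rewrite minus_INR by lia. ring. }
    rewrite sf_plus.
    change (sum_from (fun r => Binomial.C m r * dfall lam x (S r) * dfall lam y (m - r)) 0 (S m))
      with (sum_from (fun r => Binomial.C m r * dfall lam x (S r) * dfall lam y (m - r)) 0 m
            + Binomial.C m (0 + m) * dfall lam x (S (0 + m)) * dfall lam y (m - (0 + m))).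
    rewrite sf_shift, sf_reindex.
    rewrite (sf_ext (fun i => Binomial.C m (S i) * dfall lam x (S i) * dfall lam y (S (m - S i)))
                    (fun i => Binomial.C m (S i) * dfall lam x (S i) * dfall lam y (m - i))).
    2:{ intros i Hi. cbv beta. rewrite Nat.add_0_l. replace (S (m - S i)) with (m - i)%nat by lia. reflexivity. }
    rewrite sf_shift. rewrite sf_reindex.
    change (sum_from (fun i => Binomial.C (S m) (S i) * dfall lam x (S i) * dfall lam y (S m - S i)) 0 (S m))
      with (sum_from (fun i => Binomial.C (S m) (S i) * dfall lam x (S i) * dfall lam y (S m - S i)) 0 m
            + Binomial.C (S m) (S (0 + m)) * dfall lam x (S (0 + m)) * dfall lam y (S m - S (0 + m))).
    rewrite (sf_ext (fun i => Binomial.C (S m) (S i) * dfall lam x (S i) * dfall lam y (S m - S i))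
       (fun i => Binomial.C m i * dfall lam x (S i) * dfall lam y (m - i)
               + Binomial.C m (S i) * dfall lam x (S i) * dfall lam y (m - i))).
    2:{ intros i Hi. simpl (S m - S (0 + i))%nat. rewrite Nat.add_0_l; simpl (S m - S i)%nat. rewrite <- pascal by lia. ring. }
    rewrite sf_plus. simpl (0 + m)%nat. rewrite !Nat.sub_diag, Nat.sub_0_r, !C_n_0, !C_n_n.
    simpl (dfall lam x 0). simpl (dfall lam y 0). rewrite !Nat.sub_0_r. ring.
Qed.

Lemma dfall_m1 lam m : dfall lam (- (1)) m = (-1) ^ m * drise lam 1 m.
Proof. induction m as [|m IH]; simpl; [ring|]. rewrite IH; ring. Qed.

Theorem theorem2p4 (lam : R) (n k : nat) (hn : (1 <= n)%nat) (hk : (1 <= k)%nat) :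
  Ssum lam k n =
    dfall lam (INR n) (k + 1) / INR (k + 1)
    + / INR (k + 1) *
      sum_from (fun r => Binomial.C (k + 1) r * (-1) ^ (k + 1 - r)
                         * drise lam 1 (k + 1 - r) * Ssum lam r n) 0 k.
Proof.
  set (T := fun r (x : R) => Binomial.C (k + 1) r * (-1) ^ (k + 1 - r)
                         * drise lam 1 (k + 1 - r) * dfall lam x r).
  assert (Hj : forall x, INR (k + 1) * dfall lam x k =
     dfall lam x (k + 1) - dfall lam (x - 1) (k + 1) + sum_from (fun r => T r x) 0 k).
  { intros x. unfold Rminus at 2. rewrite dbin.
    replace (k + 1)%nat with (S k) by lia.
    change (sum_from (fun r => Binomial.C (S k) r * dfall lam x r * dfall lam (- (1)) (S k - r)) 0 (S (S k)))
      with (sum_from (fun r => Binomial.C (S k) r * dfall lam x r * dfall lam (- (1)) (S k - r)) 0 k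
         + Binomial.C (S k) (0 + k) * dfall lam x (0 + k) * dfall lam (- (1)) (S k - (0 + k))
         + Binomial.C (S k) (0 + S k) * dfall lam x (0 + S k) * dfall lam (- (1)) (S k - (0 + S k))).
    rewrite (sf_ext (fun r => Binomial.C (S k) r * dfall lam x r * dfall lam (- (1)) (S k - r)) (fun r => T r x) 0 k).
    2:{ intros i Hi. unfold T. rewrite dfall_m1. replace (k + 1)%nat with (S k) by lia. ring. }
    simpl (0 + k)%nat. simpl (0 + S k)%nat. idtac.
    replace (S k - k)%nat with 1%nat by lia. rewrite C_Sn_n, C_n_n. simpl (dfall lam (- (1)) 1).
    simpl (dfall lam (- (1)) 0). rewrite Nat.sub_diag. simpl (dfall lam (- (1)) 0). ring. }
  assert (Hk : INR (k + 1) <> 0) by (rewrite plus_INR; simpl; pose proof (pos_INR k); lra).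
  apply (Rmult_eq_reg_l (INR (k + 1))); [|exact Hk].
  unfold Ssum. rewrite <- sf_scal.
  rewrite (sf_ext (fun i => INR (k + 1) * dfall lam (INR i) k)
     (fun i => (dfall lam (INR (S (i - 1))) (k + 1) - dfall lam (INR (i - 1)) (k + 1))
              + sum_from (fun r => T r (INR i)) 0 k)).
  2:{ intros i Hi. rewrite Hj. replace (S (1 + i - 1)) with (1 + i)%nat by lia.
      replace (INR (1 + i) - 1) with (INR (1 + i - 1)); [reflexivity|].
      rewrite minus_INR by lia. simpl (INR 1). reflexivity. }
  rewrite sf_plus, sf_reindex.
  rewrite (sf_ext (fun i => dfall lam (INR (S (S i - 1))) (k + 1) - dfall lam (INR (S i - 1)) (k + 1))
                  (fun i => dfall lam (INR (S i)) (k + 1) - dfall lam (INR i) (k + 1))).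
  2:{ intros i _. simpl (S (0 + i) - 1)%nat. rewrite Nat.sub_0_r. reflexivity. }
  rewrite (sf_tele (fun i => dfall lam (INR i) (k + 1))).
  rewrite sf_swap.
  replace (dfall lam (INR 0) (k + 1)) with 0.
  2:{ replace (k + 1)%nat with (S k) by lia. clear. induction k as [|k IH]; simpl in *. ring.
        rewrite <- IH. ring. }
  rewrite Rmult_plus_distr_l. field_simplify; [|exact Hk].
  f_equal. apply sf_ext. intros r _. unfold T. rewrite <- sf_scal. reflexivity.
Qed.
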